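(* Let $F$ be a $2$-dimensional freezing cellular automaton with neighborhood $\mathrm{VN}_2$, let $c$ be a configuration, $z\in\mathbb{Z}^2$ and $t\geq1$ with $F^t(c)_z\neq c_z$. Then there exist a position $z'$ which is unstable in $c$ and a changing path of length at most $t$ from $z$ to $z'$ between the configurations $c$ and $F^t(c)$.
   Context: A $2$-dimensional cellular automaton is $F=(2,Q,N,f)$ with $Q$ finite, $N\subset\mathbb{Z}^2$ finite, $f:Q^N\to Q$, global map $F(c)_z=f(c|_{z+N})$; it is freezing if there is a partial order $\preceq$ on $Q$ with $F(c)_z\preceq c_z$ for all $c,z$. $\mathrm{VN}_2=\{(0,0),(\pm1,0),(0,\pm1)\}$. A position $z$ is stable in $c$ if $F(c)_z=c_z$ and unstable otherwise. A changing path from $z$ to $z'$ between configurations $c$ and $F^t(c)$ is a sequence $z_1,\dots,z_n$ of positions with $z_1=z$, $z_n=z'$, $z_{i+1}\in z_i+\mathrm{VN}_2$ for all $i<n$, and $c_{z_i}\neq F^t(c)_{z_i}$ for all $i$; its length is $n$. *)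

(* Defs.v *)
From Stdlib Require Import ZArith List.
Import ListNotations.
Open Scope Z_scope.

Definition pos := (Z * Z)%type.
Definition config (Q : Type) := pos -> Q.
Definition padd (a b : pos) : pos := (fst a + fst b, snd a + snd b).

Inductive vn := VC | VE | VW | VN | VS.
Definition voff (d : vn) : pos :=
  match d with
  | VC => (0, 0) | VE => (1, 0) | VW => (-1, 0) | VN => (0, 1) | VS => (0, -1)
  end.
Definition in_VN2 (v : pos) : Prop := exists d, v = voff d.

Definition finite_type (Q : Type) : Prop := exists l : list Q, forall q, In q l.

Definition global {Q : Type} (f : (vn -> Q) -> Q) (c : config Q) : config Q :=
  fun z => f (fun d => c (padd z (voff d))).

Definition iterF {Q : Type} (f : (vn -> Q) -> Q) (t : nat) (c : config Q) : config Q :=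
  Nat.iter t (global f) c.

Definition partial_order {Q : Type} (le : Q -> Q -> Prop) : Prop :=
  (forall x, le x x) /\
  (forall x y, le x y -> le y x -> x = y) /\
  (forall x y z, le x y -> le y z -> le x z).

Definition freezing {Q : Type} (f : (vn -> Q) -> Q) : Prop :=
  exists le : Q -> Q -> Prop, partial_order le /\
    forall (c : config Q) (z : pos), le (global f c z) (c z).

Definition unstable {Q : Type} (f : (vn -> Q) -> Q) (c : config Q) (z : pos) : Prop :=
  global f c z <> c z.

Definition changing_path {Q : Type} (c c' : config Q) (p : list pos) (z z' : pos) : Prop :=
  (1 <= length p)%nat /\
  nth 0 p (0, 0) = z /\
  nth (length p - 1) p (0, 0) = z' /\
  (forall i, (S i < length p)%nat ->
     exists d, nth (S i) p (0, 0) = padd (nth i p (0, 0)) (voff d)) /\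
  (forall i, (i < length p)%nat -> c (nth i p (0, 0)) <> c' (nth i p (0, 0))).

(* Main.v *)
Require Import Defs.
From Stdlib Require Import ZArith List Lia Classical FunctionalExtensionality.
Import ListNotations.

Lemma iterF_S_r {Q : Type} (f : (vn -> Q) -> Q) n c :
  iterF f (S n) c = iterF f n (global f c).
Proof.
  unfold iterF. induction n; simpl; auto. simpl in IHn. rewrite IHn. reflexivity.
Qed.

Lemma path_mono {Q : Type} (c c1 c2 : config Q) p z z' :
  (forall x, c1 x <> c2 x -> c x <> c2 x) ->
  changing_path c1 c2 p z z' -> changing_path c c2 p z z'.
Proof.
  intros H [H1 [H2 [H3 [H4 H5]]]]. repeat split; auto.
Qed.

Lemma path_single {Q : Type} (c c2 : config Q) z :
  c z <> c2 z -> changing_path c c2 [z] z z.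
Proof.
  intros H. repeat split; simpl; auto.
  - intros i Hi. lia.
  - intros i Hi. destruct i; [auto|lia].
Qed.

Lemma path_app {Q : Type} (c c2 : config Q) p z z' d :
  changing_path c c2 p z z' -> c (padd z' (voff d)) <> c2 (padd z' (voff d)) ->
  changing_path c c2 (p ++ [padd z' (voff d)]) z (padd z' (voff d)).
Proof.
  intros [H1 [H2 [H3 [H4 H5]]]] Hw. unfold changing_path. rewrite length_app; simpl.
  repeat split.
  - lia.
  - rewrite app_nth1 by lia. auto.
  - rewrite app_nth2 by lia. replace (length p + 1 - 1 - length p)%nat with 0%nat by lia.
    reflexivity.
  - intros i Hi. destruct (Nat.lt_ge_cases (S i) (length p)).
    + rewrite !app_nth1 by lia. apply H4; auto.
    + assert (S i = length p) by lia. rewrite app_nth2 by lia.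
      rewrite app_nth1 by lia. replace (S i - length p)%nat with 0%nat by lia.
      simpl. exists d. rewrite <- H3. f_equal. f_equal. lia.
  - intros i Hi. destruct (Nat.lt_ge_cases i (length p)).
    + rewrite app_nth1 by lia. apply H5; auto.
    + rewrite app_nth2 by lia. replace (i - length p)%nat with 0%nat by lia.
      simpl. auto.
Qed.

Theorem mainTheorem8 (Q : Type) (HQ : finite_type Q) (f : (vn -> Q) -> Q)
  (Hfr : freezing f) (c : config Q) (z : pos) (t : nat) (Ht : (1 <= t)%nat)
  (Hz : iterF f t c z <> c z) :
  exists (z' : pos) (p : list pos),
    unstable f c z' /\ changing_path c (iterF f t c) p z z' /\ (length p <= t)%nat.
Proof.
  destruct Hfr as [le [[Hrefl [Hanti Htrans]] Hle]].
  assert (Mono : forall n c x, le (iterF f n c x) (c x)).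
  { induction n; intros c0 x; simpl. apply Hrefl.
    eapply Htrans; [apply Hle|]. apply IHn. }
  assert (L : forall n c x, iterF f n (global f c) x = c x ->
            global f c x = c x /\ iterF f n (global f c) x = global f c x).
  { intros n c0 x E.
    assert (global f c0 x = c0 x).
    { apply Hanti. apply Hle. rewrite <- E at 1. apply Mono. }
    split; congruence. }
  destruct t as [|n]; [lia|]. clear Ht.
  revert c z Hz. induction n; intros c z Hz.
  - exists z, [z]. split; [|split].
    + exact Hz.
    + apply path_single. auto.
    + simpl; lia.
  - destruct (classic (global f c z = c z)) as [Hs|Hs].
    2:{ exists z, [z]. split; [|split].
        + exact Hs.
        + apply path_single. intro E. apply Hz. auto.
        + simpl; lia. }
    rewrite iterF_S_r in Hz.
    destruct (IHn (global f c) z) as [z2 [p [Hu [Hp Hl]]]].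
    { rewrite Hs. exact Hz. }
    assert (Hp' : changing_path c (iterF f (S (S n)) c) p z z2).
    { rewrite iterF_S_r. eapply path_mono; [|exact Hp].
      intros x Hx E. symmetry in E. apply L in E. destruct E. congruence. }
    destruct (classic (global f c z2 = c z2)) as [Hs2|Hs2].
    2:{ exists z2, p. split; [|split]; auto. }
    assert (Hd : exists d, global f c (padd z2 (voff d)) <> c (padd z2 (voff d))).
    { apply NNPP. intro Hn. apply Hu.
      assert (E : (fun d => global f c (padd z2 (voff d))) = (fun d => c (padd z2 (voff d)))).
      { apply functional_extensionality. intro d.
        apply NNPP. intro Hne. apply Hn. exists d. exact Hne. }
      unfold unstable. change (f (fun d => global f c (padd z2 (voff d))) = global f c z2).
      rewrite E. reflexivity. }
    destruct Hd as [d Hd].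
    exists (padd z2 (voff d)), (p ++ [padd z2 (voff d)]). split; [|split].
    + exact Hd.
    + apply path_app; auto. rewrite iterF_S_r. intro E. symmetry in E.
      apply L in E. destruct E. congruence.
    + rewrite length_app; simpl; lia.
Qed.
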